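(* Let $C>1$ and let $P$ be a probability measure on $[0,\infty)$ with mean $\mu_P\in[0,\infty]$. Then: (1) $G_{P,C}$ is continuous and concave on $[0,\infty)$; (2) $\sup_{\mu\ge0}G_{P,C}(\mu)=G_{P,C}\big(\tfrac1C m_{P}\big)$; (3) $\tfrac1C m_P\le\mu_{P,C}\le\mu_P$.
   Context: For $\mu\ge0$ define $G_{P,C}(\mu):=\mathbb{E}_{t\sim P}[\min\{t,C\mu\}]-\mu$. The $C$-clipped mean $\mu_{P,C}$ is the largest $\mu\ge0$ with $G_{P,C}(\mu)=0$ (note $G_{P,C}(0)=0$). The $\frac1C$-median is $m_P:=\sup\{M\ge0:\mathbb{P}_{t\sim P}[t\ge M]\ge\frac1C\}$ (so $\mathbb{P}_{t\sim P}[t\ge m_P]\ge\frac1C$). *)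

(* Defs.v *)
From HB Require Import structures.
From mathcomp Require Import all_boot all_order all_algebra.
From mathcomp Require Import all_classical all_reals all_analysis.
Set Implicit Arguments. Unset Strict Implicit. Unset Printing Implicit Defensive.
Import Order.TTheory GRing.Theory Num.Theory.
Import numFieldNormedType.Exports.
Local Open Scope classical_set_scope.
Local Open Scope ring_scope.

(* P is a probability measure on R (Borel) concentrated on [0, +oo). *)

Definition meanP (R : realType) (P : probability R R) : \bar R :=
  (\int[P]_t (t%:E))%E.

(* G_{P,C}(mu) = E_{t ~ P}[min(t, C mu)] - mu ; the expectation is finite
   (integrand is bounded on the support of P), so we take its real value. *)
Definition G_PC (R : realType) (P : probability R R) (C mu : R) : R :=
  fine (\int[P]_t ((Num.min t (C * mu))%:E))%E - mu.

Definition median_PC (R : realType) (P : probability R R) (C : R) : R :=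
  sup [set M : R | 0 <= M /\ lee (C^-1)%:E (P [set t : R | M <= t])].

(* Main.v *)
Require Import Defs.
From HB Require Import structures.
From mathcomp Require Import all_boot all_order all_algebra.
From mathcomp Require Import all_classical all_reals all_analysis.
From mathcomp Require Import measurable_realfun.
From mathcomp Require Import ring lra.
Import Order.TTheory GRing.Theory Num.Theory.
Import numFieldNormedType.Exports.
Local Open Scope classical_set_scope.
Local Open Scope ring_scope.

Section S.
Variables (R : realType) (P : probability R R) (C : R).
Hypotheses (HC : 1 < C) (Hsupp : P [set t : R | 0 <= t] = 1%E).

Let D := [set t : R | 0 <= t].

Lemma mD : measurable D.
Proof.
have -> : D = [set` `[0, +oo[%R].
  by apply/seteqP; split=> x; rewrite /= in_itv /= andbT.
exact: measurable_itv.
Qed.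

Lemma PnD : P (~` D) = 0%E.
Proof.
rewrite probability_setC; last exact: mD.
have -> : P D = 1%E by exact: Hsupp.
by rewrite subee.
Qed.

Lemma mmin (c : R) (A : set R) : measurable_fun A ((fun t : R => (Num.min t c)%:E) : R -> \bar R).
Proof.
apply/measurable_EFinP; apply: measurable_minr; [exact: measurable_id | exact: measurable_cst].
Qed.

Lemma intT (f : R -> \bar R) : measurable_fun setT f ->
  (\int[P]_t f t = \int[P]_(t in D) f t)%E.
Proof.
move=> mf.
have -> : [set: R] = D `|` ~` D by rewrite setUv.
rewrite integral_setU; last 4 first.
- exact: mD.
- exact: measurableC mD.
- by rewrite setUv.
- by rewrite disj_set2E setICr.
rewrite [X in (_ + X)%E]null_set_integral ?adde0 //.
- exact: measurableC mD.
- exact: measurable_funS mf.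
- exact: PnD.
Qed.



Definition H (s : R) := (\int[P]_(t in D) (Num.min t s)%:E)%E.
Definition Hr s := fine (H s).

Lemma HT c : (\int[P]_t (Num.min t c)%:E)%E = H c.
Proof. by rewrite intT //; exact: mmin. Qed.

Lemma G_eq mu : G_PC P C mu = Hr (C * mu) - mu.
Proof. by rewrite /G_PC HT. Qed.

Lemma PD : P D = 1%E.
Proof. exact: Hsupp. Qed.

Lemma int_cst (c : R) : (\int[P]_(t in D) c%:E)%E = c%:E.
Proof.
have := integral_cst P mD c%:E; rewrite /= => ->.
by rewrite PD mule1.
Qed.

Lemma H_bnd s : 0 <= s -> (0 <= H s /\ H s <= s%:E)%E.
Proof.
move=> s0; split.
  apply: integral_ge0 => t /= t0; rewrite lee_fin le_min t0 s0 //.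
rewrite -int_cst; apply: ge0_le_integral.
- exact: mD.
- move=> t /= t0; rewrite lee_fin le_min t0 s0 //.
- exact: mmin.
- exact: measurable_cst.
- move=> t _; rewrite lee_fin; case: (leP t s) => h; lra.
Qed.

Lemma H_fine s : 0 <= s -> H s = (Hr s)%:E.
Proof.
move=> s0; have [h1 h2] := H_bnd s s0.
rewrite /Hr fineK // ge0_fin_numE //; exact: (le_lt_trans h2 (ltey _)).
Qed.

Lemma Hr_bnd s : 0 <= s -> 0 <= Hr s <= s.
Proof.
move=> s0; have [h1 h2] := H_bnd s s0; rewrite H_fine // !lee_fin in h1 h2.
by rewrite h1 h2.
Qed.

Lemma Hr_mono s s' : 0 <= s -> s <= s' -> Hr s <= Hr s'.
Proof.
move=> s0 ss'; have s'0 : 0 <= s' by lra.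
rewrite -lee_fin -!H_fine //; apply: ge0_le_integral.
- exact: mD.
- move=> t /= t0; rewrite lee_fin le_min t0 s0 //.
- exact: mmin.
- exact: mmin.
- move=> t _; rewrite lee_fin; case: (leP t s) => h; case: (leP t s') => h'; lra.
Qed.

Lemma Hr_lip s s' : 0 <= s -> s <= s' -> Hr s' <= Hr s + (s' - s).
Proof.
move=> s0 ss'; have s'0 : 0 <= s' by lra.
rewrite -lee_fin EFinD -!H_fine // -(int_cst (s' - s)) /H.
rewrite -ge0_integralD.
- apply: ge0_le_integral.
  + exact: mD.
  + move=> t /= t0; rewrite lee_fin le_min t0 s'0 //.
  + exact: mmin.
  + apply: emeasurable_funD; [exact: mmin | exact: measurable_cst].
  + move=> t _; rewrite -EFinD lee_fin; case: (leP t s) => h; case: (leP t s') => h'; lra.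
- exact: mD.
- move=> t /= t0; rewrite lee_fin le_min t0 s0 //.
- exact: mmin.
- move=> t _; rewrite lee_fin; lra.
- exact: measurable_cst.
Qed.

Lemma Hr_conc a x y : 0 <= a <= 1 -> 0 <= x -> 0 <= y ->
  a * Hr x + (1 - a) * Hr y <= Hr (a * x + (1 - a) * y).
Proof.
move=> /andP[a0 a1] x0 y0.
have z0 : 0 <= a * x + (1 - a) * y by nra.
have a'0 : 0 <= 1 - a by lra.
rewrite -lee_fin EFinD !EFinM -!H_fine // /H.
rewrite -ge0_integralZl_EFin //; last 3 first.
- exact: mD.
- move=> t /= t0; rewrite lee_fin le_min t0 x0 //.
- exact: mmin.
rewrite -ge0_integralZl_EFin //; last 3 first.
- exact: mD.
- move=> t /= t0; rewrite lee_fin le_min t0 y0 //.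
- exact: mmin.
rewrite -ge0_integralD.
- apply: ge0_le_integral.
  + exact: mD.
  + move=> t /= t0; rewrite -!EFinM -EFinD lee_fin.
    apply: addr_ge0; apply: mulr_ge0 => //; rewrite le_min t0 //.
  + apply: emeasurable_funD; apply: emeasurable_funM;
      (exact: measurable_cst || exact: mmin).
  + exact: mmin.
  + move=> t /= t0; rewrite -!EFinM -EFinD lee_fin.
    case: (leP t x) => h; case: (leP t y) => h';
    case: (leP t (a * x + (1 - a) * y)) => h''; nra.
- exact: mD.
- move=> t /= t0; rewrite -EFinM lee_fin; apply: mulr_ge0 => //; rewrite le_min t0 //.
- apply: emeasurable_funM; (exact: measurable_cst || exact: mmin).
- move=> t /= t0; rewrite -EFinM lee_fin; apply: mulr_ge0 => //; rewrite le_min t0 //.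
- apply: emeasurable_funM; (exact: measurable_cst || exact: mmin).
Qed.

Lemma int_indic (g : R -> R) (c : R) (E : set R) :
  measurable_fun D g -> (forall t, D t -> 0 <= g t) -> 0 <= c ->
  measurable E -> E `<=` D ->
  (\int[P]_(t in D) ((g t)%:E + c%:E * (\1_E t)%:E) =
   \int[P]_(t in D) (g t)%:E + c%:E * P E)%E.
Proof.
move=> mg g0 c0 mE ED.
rewrite (@ge0_integralD _ _ _ P D mD (fun t => (g t)%:E) (fun t => c%:E * (\1_E t)%:E)%E); last 4 first.
- by move=> t /g0; rewrite lee_fin.
- by apply/measurable_EFinP.
- by move=> t _; rewrite -EFinM lee_fin indicE mulr_ge0.
- apply: emeasurable_funM; first exact: measurable_cst.
  apply/measurable_EFinP; exact: measurable_indic.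
rewrite ge0_integralZl_EFin //.
- rewrite integral_indic //; first by rewrite setIidl.
  exact: mD.
- exact: mD.
- apply/measurable_EFinP; exact: measurable_indic.
Qed.

Lemma Hr_mean s : 0 <= s -> ((Hr s)%:E <= meanP P)%E.
Proof.
move=> s0; rewrite -H_fine // /meanP intT; last by apply/measurable_EFinP.
apply: ge0_le_integral.
- exact: mD.
- move=> t /= t0; rewrite lee_fin le_min t0 s0 //.
- exact: mmin.
- by apply/measurable_EFinP.
- move=> t _; rewrite lee_fin; case: (leP t s) => h; lra.
Qed.

Lemma archi (x : R) : 0 < x -> exists n : nat, (n.+1%:R)^-1 < x.
Proof.
move=> x0; exists (Num.trunc x^-1).
rewrite invf_plt ?posrE //.
exact: truncnS_gt.
Qed.

Lemma dec_ge (F : (set R)^nat) (x : \bar R) : (forall n, measurable (F n)) ->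
  nonincreasing_seq F -> (forall n, (x <= P (F n))%E) ->
  (x <= P (\bigcap_n F n))%E.
Proof.
move=> mF nF h.
have cF := nonincreasing_cvg_mu (le_lt_trans (probability_le1 P (mF 0%N)) (ltey _)) mF (bigcapT_measurable mF) nF.
rewrite -(cvg_lim (@ereal_hausdorff R) cF).
apply: lime_ge; first exact: (cvgP _ cF).
exact: nearW.
Qed.

Lemma inc_le (F : (set R)^nat) (x : \bar R) : (forall n, measurable (F n)) ->
  nondecreasing_seq F -> (forall n, (P (F n) <= x)%E) ->
  (P (\bigcup_n F n) <= x)%E.
Proof.
move=> mF nF h.
have cF := @nondecreasing_cvg_mu _ _ _ P F mF (bigcupT_measurable _ mF) nF.
rewrite -(cvg_lim (@ereal_hausdorff R) cF).
apply: lime_le; first exact: (cvgP _ cF).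
exact: nearW.
Qed.

Lemma mIge a : measurable [set t : R | a <= t].
Proof.
have -> : [set t : R | a <= t] = [set` `[a, +oo[%R].
  by apply/seteqP; split=> x; rewrite /= in_itv /= andbT.
exact: measurable_itv.
Qed.

Lemma mIgt a : measurable [set t : R | a < t].
Proof.
have -> : [set t : R | a < t] = [set` `]a, +oo[%R].
  by apply/seteqP; split=> x; rewrite /= in_itv /= andbT.
exact: measurable_itv.
Qed.

Lemma le_P (A B : set R) : measurable A -> measurable B -> A `<=` B -> (P A <= P B)%E.
Proof. by move=> mA mB AB; apply: le_measure => //; rewrite inE. Qed.

Lemma tail (e : R) : 0 < e -> exists n : nat, (P [set t : R | (n%:R <= t)%R] < e%:E)%E.
Proof.
move=> e0; apply: contrapT => hne.
have h n : (e%:E <= P [set t : R | (n%:R <= t)%R])%E.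
  rewrite leNgt; apply/negP => hlt; apply: hne; by exists n.
have nF : nonincreasing_seq (fun n : nat => [set t : R | (n%:R <= t)%R]).
  move=> n k nk; apply/subsetPset => t /=; apply: le_trans; by rewrite ler_nat.
have := @dec_ge (fun n : nat => [set t : R | (n%:R <= t)%R]) _ (fun n => mIge _) nF h.
have -> : \bigcap_n [set t : R | (n%:R <= t)%R] = set0.
  apply/seteqP; split => // t /= ht.
  have := ht (Num.trunc t).+1 I; have := truncnS_gt t => /= a b; lra.
rewrite measure0 lee_fin; lra.
Qed.

Let S := [set M : R | 0 <= M /\ lee (C^-1)%:E (P [set t : R | M <= t])].
Lemma C0 : 0 < C. Proof. by apply: lt_trans HC. Qed.


Lemma S0 : S 0.
Proof.
split => //; rewrite PD lee_fin invf_le1 ?(ltW HC) //; exact: C0.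
Qed.

Lemma Ci : 0 < C^-1. Proof. by rewrite invr_gt0 C0. Qed.

Lemma hasS : has_sup S.
Proof.
split; first by exists 0; exact: S0.
have [n hn] := tail _ Ci.
exists n%:R => M [M0 hM]; rewrite leNgt; apply/negP => nM.
have h2 : [set t | M <= t] `<=` [set t | n%:R <= t] by move=> t /= Mt; lra.
have := le_lt_trans (le_trans hM (le_P _ _ (mIge _) (mIge _) h2)) hn.
by rewrite ltxx.
Qed.

Lemma mE : median_PC P C = sup S. Proof. by []. Qed.

Lemma m0 : 0 <= median_PC P C.
Proof. rewrite mE; exact: (sup_upper_bound hasS S0). Qed.

Lemma Pge : lee (C^-1)%:E (P [set t : R | median_PC P C <= t]).
Proof.
set m := median_PC P C.
pose F n := [set t : R | m - (n.+1%:R)^-1 <= t].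
have mF n : measurable (F n) by exact: mIge.
have nF : nonincreasing_seq F.
  move=> n k nk; apply/subsetPset => t /=.
  have hk : (k.+1%:R)^-1 <= (n.+1%:R)^-1 :> R.
    by rewrite lef_pV2 ?posrE ?ltr0Sn // ler_nat.
  rewrite /F /=; apply: le_trans; by rewrite lerD2l lerN2.
have h n : lee (C^-1)%:E (P (F n)).
  have hpos : 0 < (n.+1%:R)^-1 :> R by rewrite invr_gt0 ltr0Sn.
  have [M [M0 hM] hMm] := sup_adherent hpos hasS.
  apply: (le_trans hM); apply: le_P; [exact: mIge | exact: mF |].
  by move=> t /= Mt; rewrite -mE in hMm; exact: le_trans (ltW hMm) Mt.
apply: (le_trans (dec_ge _ _ mF nF h)); apply: le_P; [exact: bigcapT_measurable | exact: mIge |].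
move=> t /= ht; rewrite leNgt; apply/negP => tm.
have mt : 0 < m - t by rewrite subr_gt0.
have [n hn] := archi _ mt.
have := ht n I; rewrite /F /= => hh.
pose q : R := (n.+1%:R)^-1.
change (is_true (m - q <= t)) in hh; change (is_true (q < m - t)) in hn.
lra.
Qed.

Lemma Pgt : lee (P [set t : R | median_PC P C < t]) (C^-1)%:E.
Proof.
set m := median_PC P C.
pose F n := [set t : R | m + (n.+1%:R)^-1 <= t].
have mF n : measurable (F n) by exact: mIge.
have nF : nondecreasing_seq F.
  move=> n k nk; apply/subsetPset => t /=.
  have hk : (k.+1%:R)^-1 <= (n.+1%:R)^-1 :> R.
    by rewrite lef_pV2 ?posrE ?ltr0Sn // ler_nat.
  rewrite /F /=; apply: le_trans; by rewrite lerD2l.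
have h n : lee (P (F n)) (C^-1)%:E.
  rewrite leNgt; apply/negP => /ltW hle.
  have hpos : 0 < (n.+1%:R)^-1 :> R by rewrite invr_gt0 ltr0Sn.
  have SM : S (m + (n.+1%:R)^-1).
    split; last exact: hle.
    by apply: addr_ge0; [exact: m0 | exact: ltW].
  have := sup_upper_bound hasS SM; rewrite -mE -/m.
  pose q : R := (n.+1%:R)^-1.
  change (is_true (0 < q)) in hpos; change (is_true (m + q <= m) -> False).
  move=> hh; clear -hh hpos; lra.
apply: le_trans (inc_le _ _ mF nF h); apply: le_P; [exact: mIgt | exact: bigcupT_measurable |].
move=> t /= tm.
have mt : 0 < t - m by rewrite subr_gt0.
have [n hn] := archi _ mt.
exists n => //; rewrite /F /=.
pose q : R := (n.+1%:R)^-1.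
change (is_true (q < t - m)) in hn; change (is_true (m + q <= t)).
lra.
Qed.

Lemma indic_le (a t : R) : \1_[set x : R | a <= x] t = (if a <= t then 1 else 0 : R).
Proof.
rewrite indicE; case: ifPn => h.
  by rewrite mem_set.
by rewrite memNset //=; apply/negP.
Qed.

Lemma indic_lt (a t : R) : \1_[set x : R | a < x] t = (if a < t then 1 else 0 : R).
Proof.
rewrite indicE; case: ifPn => h.
  by rewrite mem_set.
by rewrite memNset //=; apply/negP.
Qed.

Lemma mminr (c : R) : measurable_fun D (fun t : R => Num.min t c).
Proof. apply: measurable_minr; [exact: measurable_id | exact: measurable_cst]. Qed.

Lemma Hup s : median_PC P C <= s ->
  Hr s <= Hr (median_PC P C) + (s - median_PC P C) * C^-1.
Proof.
set m := median_PC P C => ms.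
have m00 : 0 <= m := m0.
have s0 : 0 <= s by lra.
have c0 : 0 <= s - m by lra.
have g0 : forall t, D t -> 0 <= Num.min t m by move=> t t0; rewrite le_min t0 m00.
have ED : [set t | m < t] `<=` D by move=> t /= mt; rewrite /D /=; lra.
have E := @int_indic (fun t => Num.min t m) (s - m) [set t | m < t] (mminr m) g0 c0 (mIgt m) ED.
rewrite -lee_fin EFinD EFinM -!H_fine //.
apply: le_trans (_ : (H s <= \int[P]_(t in D) ((Num.min t m)%:E + (s - m)%:E * (\1_[set t | m < t] t)%:E))%E) _.
  apply: ge0_le_integral.
  - exact: mD.
  - move=> t /= t0; rewrite lee_fin le_min t0 s0 //.
  - exact: mmin.
  - apply: emeasurable_funD; first exact: mmin.
    apply: emeasurable_funM; first exact: measurable_cst.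
    apply/measurable_EFinP; exact: measurable_indic (mIgt _).
  - move=> t /= t0; rewrite -EFinM -EFinD lee_fin indic_lt.
    case: (leP t s) => h1; case: (leP t m) => h2 /=; lra.
rewrite E; apply: leeD2l; apply: lee_wpmul2l; first by rewrite lee_fin.
exact: Pgt.
Qed.

Lemma Hdown s : 0 <= s -> s <= median_PC P C ->
  Hr s + (median_PC P C - s) * C^-1 <= Hr (median_PC P C).
Proof.
set m := median_PC P C => s0 ms.
have m00 : 0 <= m := m0.
have c0 : 0 <= m - s by lra.
have g0 : forall t, D t -> 0 <= Num.min t s by move=> t t0; rewrite le_min t0 s0.
have ED : [set t | m <= t] `<=` D by move=> t /= mt; rewrite /D /=; lra.
have E := @int_indic (fun t => Num.min t s) (m - s) [set t | m <= t] (mminr s) g0 c0 (mIge m) ED.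
rewrite -lee_fin EFinD EFinM -!H_fine //.
have h1 : (H s + (m - s)%:E * (C^-1)%:E <= H s + (m - s)%:E * P [set t | (m <= t)%R])%E.
  apply: leeD2l; apply: lee_wpmul2l; first by rewrite lee_fin.
  exact: Pge.
apply: le_trans h1 _.
rewrite /H -E.
apply: ge0_le_integral.
- exact: mD.
- move=> t /= t0; rewrite -EFinM -EFinD lee_fin indic_le.
  apply: addr_ge0; first by rewrite le_min t0 s0.
  by apply: mulr_ge0 => //; case: ifPn.
- apply: emeasurable_funD; first exact: mmin.
  apply: emeasurable_funM; first exact: measurable_cst.
  apply/measurable_EFinP; exact: measurable_indic (mIge _).
- exact: mmin.
- move=> t /= t0; rewrite -EFinM -EFinD lee_fin indic_le.
  case: (leP t s) => h1'; case: (leP m t) => h2 /=; case: (leP t m) => h3; lra.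
Qed.

Lemma Hmax s : 0 <= s ->
  Hr s - s * C^-1 <= Hr (median_PC P C) - median_PC P C * C^-1.
Proof.
move=> s0.
have [ms|sm] := leP (median_PC P C) s.
  have := Hup _ ms; rewrite mulrBl; lra.
have := Hdown _ s0 (ltW sm); rewrite mulrBl; lra.
Qed.

Lemma Gneg : exists mu1, 0 < mu1 /\ G_PC P C mu1 < 0.
Proof.
have e0 : 0 < (4 * C)^-1 by rewrite invr_gt0 mulr_gt0 // C0.
have [n hn] := tail _ e0.
set K : R := n%:R.
have K0 : 0 <= K by rewrite /K ler0n.
set mu1 := 2 * K + 1.
have mu0 : 0 < mu1 by rewrite /mu1; lra.
exists mu1; split => //.
set s := C * mu1.
have s0 : 0 <= s by rewrite /s mulr_ge0 // ltW // C0.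
have g0 : forall t, D t -> 0 <= K by [].
have ED : [set t | K <= t] `<=` D by move=> t /= mt; rewrite /D /=; lra.
have E := @int_indic (fun _ => K) s [set t | K <= t] (measurable_cst _) g0 s0 (mIge K) ED.
rewrite int_cst in E.
have h : (H s <= K%:E + s%:E * (4 * C)^-1%:E)%E.
  apply: le_trans (_ : (H s <= K%:E + s%:E * P [set t | (K <= t)%R])%E) _.
    rewrite -E; apply: ge0_le_integral.
    - exact: mD.
    - move=> t /= t0; rewrite lee_fin le_min t0 s0 //.
    - exact: mmin.
    - apply: emeasurable_funD; first exact: measurable_cst.
      apply: emeasurable_funM; first exact: measurable_cst.
      apply/measurable_EFinP; exact: measurable_indic (mIge _).
    - move=> t /= t0; rewrite -EFinM -EFinD lee_fin indic_le.
      case: (leP t s) => h1; case: (leP K t) => h2 /=; lra.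
  apply: leeD2l; apply: lee_wpmul2l; first by rewrite lee_fin.
  exact: ltW.
rewrite H_fine // -EFinM -EFinD lee_fin in h.
have hs : s * (4 * C)^-1 = mu1 / 4.
  rewrite /s; field; exact: lt0r_neq0 C0.
have emu : mu1 = 2 * K + 1 by [].
rewrite G_eq -/s; rewrite hs in h; lra.
Qed.

Lemma Glip x y : 0 <= x -> x <= y ->
  `|G_PC P C y - G_PC P C x| <= (C + 1) * (y - x).
Proof.
move=> x0 xy.
have Cx0 : 0 <= C * x by rewrite mulr_ge0 // ltW // C0.
have Cxy : C * x <= C * y by rewrite ler_pM2l // C0.
have h1 := Hr_mono _ _ Cx0 Cxy.
have h2 := Hr_lip _ _ Cx0 Cxy.
rewrite !G_eq ler_norml mulrDl mul1r mulrBr; apply/andP; split; lra.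
Qed.

Lemma Gconc x y a : 0 <= x -> 0 <= y -> 0 <= a <= 1 ->
  a * G_PC P C x + (1 - a) * G_PC P C y <= G_PC P C (a * x + (1 - a) * y).
Proof.
move=> x0 y0 a01.
have Cx0 : 0 <= C * x by rewrite mulr_ge0 // ltW // C0.
have Cy0 : 0 <= C * y by rewrite mulr_ge0 // ltW // C0.
have h := Hr_conc _ _ _ a01 Cx0 Cy0.
rewrite !G_eq.
have -> : C * (a * x + (1 - a) * y) = a * (C * x) + (1 - a) * (C * y) by ring.
move: h.
set u := Hr (C * x); set v := Hr (C * y); set w := Hr _ => h.
rewrite !mulrBr; lra.
Qed.

Lemma Gmax mu : 0 <= mu -> G_PC P C mu <= G_PC P C (C^-1 * median_PC P C).
Proof.
move=> mu0.
have Cmu0 : 0 <= C * mu by rewrite mulr_ge0 // ltW // C0.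
have h := Hmax _ Cmu0.
have CC : C != 0 := lt0r_neq0 C0.
have e1 : C * (C^-1 * median_PC P C) = median_PC P C by field.
have e2 : C * mu * C^-1 = mu by field.
rewrite !G_eq e1; rewrite e2 in h.
have e3 : median_PC P C * C^-1 = C^-1 * median_PC P C by rewrite mulrC.
rewrite e3 in h; lra.
Qed.

Lemma G0 : G_PC P C 0 = 0.
Proof.
rewrite G_eq mulr0 subr0; have /andP[a b] := Hr_bnd _ (lexx (0:R)).
by apply/eqP; rewrite eq_le a b.
Qed.

Lemma Gcont : {within [set mu : R | 0 <= mu], continuous (G_PC P C)}.
Proof.
apply/subspace_continuousP => x /= x0.
apply/cvgrPdist_le => e e0.
have k0 : 0 < C + 1 by have := C0; lra.
have d0 : 0 < e / (C + 1) by rewrite divr_gt0.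
rewrite near_withinE; near=> t => /= t0.
have htx : `|x - t| < e / (C + 1).
  near: t; apply: (@cvgr_dist_lt _ _ _ (nbhs x) _ id x) => //; exact: cvg_id.
rewrite /from_subspace.
have hl : `|G_PC P C x - G_PC P C t| <= (C + 1) * `|x - t|.
  have [xt|tx] := leP x t.
    rewrite distrC (distrC x t) (ger0_norm (_ : 0 <= t - x)); last by rewrite subr_ge0.
    exact: Glip.
  rewrite (ger0_norm (_ : 0 <= x - t)); last by rewrite subr_ge0 ltW.
  apply: Glip => //; exact: ltW.
apply: (le_trans hl).
rewrite -ler_pdivlMl //; apply: ltW; rewrite mulrC; exact: htx.
Unshelve. all: by end_near.
Qed.

Lemma Gbound mu1 mu : 0 < mu1 -> G_PC P C mu1 < 0 -> mu1 <= mu -> G_PC P C mu < 0.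
Proof.
move=> mu10 gneg mm.
have mu0 : 0 < mu by apply: lt_le_trans mu10 mm.
set a := mu1 / mu.
have a0 : 0 <= a by rewrite divr_ge0 // ltW.
have a1 : a <= 1 by rewrite ler_pdivrMr // mul1r.
have ap : 0 < a by rewrite divr_gt0.
have a01 : 0 <= a <= 1 by rewrite a0 a1.
have := Gconc mu 0 a (ltW mu0) (lexx 0) a01.
rewrite G0 !mulr0 !addr0.
have -> : a * mu = mu1 by rewrite /a mulfVK // lt0r_neq0.
move=> h; have h2 := le_lt_trans h gneg.
by move: h2; rewrite pmulr_rlt0.
Qed.

Lemma clipped : exists muc : R,
      [/\ 0 <= muc, G_PC P C muc = 0,
          (forall mu : R, 0 <= mu -> G_PC P C mu = 0 -> mu <= muc),
          C^-1 * median_PC P C <= muc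
        & lee muc%:E (meanP P)].
Proof.
have [mu1 [mu10 g1]] := Gneg.
pose Z := [set mu : R | 0 <= mu /\ 0 <= G_PC P C mu].
have Z0 : Z 0 by split => //; rewrite G0.
have Zb : forall mu, Z mu -> mu <= mu1.
  move=> mu [mu0 gm]; rewrite leNgt; apply/negP => h.
  have := Gbound _ _ mu10 g1 (ltW h); rewrite ltNge gm //.
have hZ : has_sup Z by split; [exists 0 | exists mu1].
set s := sup Z.
have s0 : 0 <= s := sup_upper_bound hZ Z0.
have k0 : 0 < C + 1 by have := C0; lra.
have Gs0 : 0 <= G_PC P C s.
  rewrite leNgt; apply/negP => gs.
  have eps0 : 0 < - G_PC P C s / (C + 1) by rewrite divr_gt0 // oppr_gt0.
  have [x [x0 gx] hx] := sup_adherent eps0 hZ.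
  have xs : x <= s := sup_upper_bound hZ (conj x0 gx).
  have := Glip _ _ x0 xs; rewrite ler_norml => /andP[l _].
  have : (C + 1) * (s - x) < - G_PC P C s.
    rewrite -ltr_pdivlMl // mulrC; rewrite -/s in hx; 
    move: hx; set q := _ / _; lra.
  lra.
have Gs1 : G_PC P C s <= 0.
  rewrite leNgt; apply/negP => gs.
  set d := G_PC P C s / (C + 1).
  have d0 : 0 < d by rewrite divr_gt0.
  have sd : s <= s + d by lra.
  have := Glip _ _ s0 sd; rewrite ler_norml => /andP[l _].
  have e : (C + 1) * (s + d - s) = G_PC P C s by rewrite /d; field; exact: lt0r_neq0.
  rewrite e in l.
  have Zsd : Z (s + d) by split; lra.
  have := sup_upper_bound hZ Zsd; rewrite -/s; lra.
have Gs : G_PC P C s = 0 by apply/eqP; rewrite eq_le Gs1 Gs0.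
exists s; split => //.
- move=> mu mu0 gm; apply: (sup_upper_bound hZ); split => //; by rewrite gm.
- apply: (sup_upper_bound hZ); split.
    by rewrite mulr_ge0 ?m0 // ltW // Ci.
  rewrite -G0; apply: Gmax; exact: lexx.
- have Cs0 : 0 <= C * s by rewrite mulr_ge0 // ltW // C0.
  have e : Hr (C * s) = s by move: Gs; rewrite G_eq => /eqP; rewrite subr_eq0 => /eqP.
  by rewrite -[X in lee X%:E _]e; exact: Hr_mean.
Qed.

Lemma main_sec :
  ({within [set mu : R | 0 <= mu], continuous (G_PC P C)} /\
   (forall x y a : R, 0 <= x -> 0 <= y -> 0 <= a <= 1 ->
      a * G_PC P C x + (1 - a) * G_PC P C y <= G_PC P C (a * x + (1 - a) * y)))
  /\
  sup [set G_PC P C mu | mu in [set mu : R | 0 <= mu]]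
    = G_PC P C (C^-1 * median_PC P C)
  /\
  (exists muc : R,
      [/\ 0 <= muc, G_PC P C muc = 0,
          (forall mu : R, 0 <= mu -> G_PC P C mu = 0 -> mu <= muc),
          C^-1 * median_PC P C <= muc
        & lee muc%:E (meanP P)]).
Proof.
split; first by split; [exact: Gcont | move=> x y a x0 y0 a01; exact: Gconc].
split; last exact: clipped.
have mC0 : 0 <= C^-1 * median_PC P C by rewrite mulr_ge0 ?m0 // ltW // Ci.
have ub : ubound [set G_PC P C mu | mu in [set mu : R | 0 <= mu]] (G_PC P C (C^-1 * median_PC P C)).
  by move=> _ [mu mu0 <-]; exact: Gmax.
apply/eqP; rewrite eq_le; apply/andP; split.
  apply: ge_sup => //; by exists (G_PC P C (C^-1 * median_PC P C)), (C^-1 * median_PC P C).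
apply: sup_upper_bound; last by exists (C^-1 * median_PC P C).
split; last by exists (G_PC P C (C^-1 * median_PC P C)).
by exists (G_PC P C (C^-1 * median_PC P C)), (C^-1 * median_PC P C).
Qed.
End S.

Theorem mainTheorem15 (R : realType) (P : probability R R) (C : R)
  (HC : 1 < C) (Hsupp : P [set t : R | 0 <= t] = 1%E) :
  (* (1) continuity and concavity of G on [0, +oo) *)
  ({within [set mu : R | 0 <= mu], continuous (G_PC P C)} /\
   (forall x y a : R, 0 <= x -> 0 <= y -> 0 <= a <= 1 ->
      a * G_PC P C x + (1 - a) * G_PC P C y <= G_PC P C (a * x + (1 - a) * y)))
  /\
  (* (2) sup_{mu >= 0} G(mu) = G(m_P / C) *)
  sup [set G_PC P C mu | mu in [set mu : R | 0 <= mu]]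
    = G_PC P C (C^-1 * median_PC P C)
  /\
  (* (3) the C-clipped mean (largest mu >= 0 with G(mu) = 0) exists and
         satisfies m_P / C <= mu_{P,C} <= mu_P *)
  (exists muc : R,
      [/\ 0 <= muc, G_PC P C muc = 0,
          (forall mu : R, 0 <= mu -> G_PC P C mu = 0 -> mu <= muc),
          C^-1 * median_PC P C <= muc
        & lee muc%:E (meanP P)]).
Proof. exact: main_sec. Qed.
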